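(* Let $\Gamma$ be a connected countable graph and let $(B_n)_{n\in\mathbb N}$ satisfy $(\dagger)$. Let $u,v\in V(\Gamma)$ be such that no maximum matching misses both $u$ and $v$, but there are maximum matchings $M_u$ and $M_v$ missing $u$ and $v$ respectively. Then $M_u\oplus M_v$ contains a path of even length with end-vertices $u$ and $v$.
   Context: Condition $(\dagger)$ on $(B_n)_{n\in\mathbb N}$: each $B_n\subseteq V(\Gamma)$ is finite, $B_n\subseteq B_{n+1}$, $\bigcup_n B_n=V(\Gamma)$, and the subgraph induced on each $B_n$ is connected. A matching $M$ misses a vertex $x$ if no edge of $M$ contains $x$. The miss sequence of $M$ is $(m_n)_{n\in\mathbb N}$ with $m_n$ the number of vertices of $B_n$ missed by $M$. For matchings $M_1,M_2$ with miss sequences $(a_n),(b_n)$, write $M_1<M_2$ if there is $N$ with $a_n=b_n$ for all $n<N$ and $a_N>b_N$. A maximum matching is a matching $M$ for which no matching $M'$ satisfies $M<M'$. $S\oplus T=(S\cup T)\setminus(S\cap T)$. *)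

(* Defs.v *)
From mathcomp Require Import all_boot.
Set Implicit Arguments. Unset Strict Implicit. Unset Printing Implicit Defensive.

Section Graphs.
Variable V : countType.

Definition simple_graph (adj : rel V) := symmetric adj /\ irreflexive adj.

Definition joined_in (adj : rel V) (P : pred V) (x y : V) :=
  exists p : seq V, [/\ path adj x p, last x p = y & all P (x :: p)].

Definition connected_graph (adj : rel V) := forall x y, joined_in adj predT x y.

(* Condition (dagger): B n finite (a duplicate-free list), nested, exhausting,
   and inducing connected subgraphs. *)
Definition dagger (adj : rel V) (B : nat -> seq V) :=
  [/\ forall n, uniq (B n),
      forall n, {subset B n <= B n.+1},
      forall x, exists n, x \in B n
    & forall n x y, x \in B n -> y \in B n -> joined_in adj (mem (B n)) x y].

(* A matching is encoded by its mate function: M x = Some y iff {x,y} is an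
   edge of the matching; M x = None iff x is missed. *)
Definition matching (adj : rel V) (M : V -> option V) :=
  forall x y, M x = Some y -> adj x y /\ M y = Some x.

Definition in_matching (M : V -> option V) (x y : V) : bool := M x == Some y.

Definition misses (M : V -> option V) (x : V) : bool := M x == None.

Definition miss_seq (B : nat -> seq V) (M : V -> option V) (n : nat) : nat :=
  count (misses M) (B n).

Definition mlt (B : nat -> seq V) (M1 M2 : V -> option V) :=
  exists N, (forall n, n < N -> miss_seq B M1 n = miss_seq B M2 n)
            /\ miss_seq B M1 N > miss_seq B M2 N.

Definition maximum_matching adj B (M : V -> option V) :=
  matching adj M /\ ~ exists M', matching adj M' /\ mlt B M M'.

Definition in_symdiff (M1 M2 : V -> option V) (x y : V) : bool :=
  in_matching M1 x y != in_matching M2 x y.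

(* M1 (+) M2 contains a path (distinct vertices) of even length from u to v;
   the path is u :: p, of length size p. *)
Definition symdiff_even_path (M1 M2 : V -> option V) (u v : V) :=
  exists p : seq V, [/\ path (in_symdiff M1 M2) u p, last u p = v,
                        uniq (u :: p) & ~~ odd (size p)].
End Graphs.

(* Main.v *)
From Stdlib Require Import ClassicalEpsilon Classical.
Require Import Defs.
From mathcomp Require Import all_boot zify.
Set Implicit Arguments. Unset Strict Implicit. Unset Printing Implicit Defensive.

Section Aux.
Variable V : countType.
Variable adj : rel V.

Definition decb (P : Prop) : bool := if excluded_middle_informative P then true else false.
Lemma decbP (P : Prop) : reflect P (decb P).
Proof. rewrite /decb; case: excluded_middle_informative => H; constructor; done. Qed.

Lemma sdC (M1 M2 : V -> option V) : in_symdiff M1 M2 =2 in_symdiff M2 M1.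
Proof. by move=> x y; rewrite /in_symdiff eq_sym. Qed.

Lemma swap_matching (M1 M2 : V -> option V) (c : pred V) :
  matching adj M1 -> matching adj M2 ->
  (forall x, c x -> M1 x <> M2 x) ->
  (forall x y, c x -> in_symdiff M1 M2 x y -> c y) ->
  matching adj (fun x => if c x then M1 x else M2 x).
Proof.
move=> H1 H2 Hne Hcl x y /=.
case cx: (c x) => Hxy.
- have [Ha Hb] := H1 _ _ Hxy.
  have cy : c y.
    apply: (Hcl x) => //; rewrite /in_symdiff /in_matching Hxy eqxx /=.
    case: (M2 x =P Some y) => [E|//]; case: (Hne x cx); by rewrite Hxy E.
  by rewrite cy.
- have [Ha Hb] := H2 _ _ Hxy.
  case cy: (c y); last by [].
  exfalso; have : c x.
    apply: (Hcl y) => //; rewrite /in_symdiff /in_matching Hb eqxx.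
    case: (M1 y =P Some x) => [E|//]; case: (Hne y cy); by rewrite Hb E.
  by rewrite cx.
Qed.

Lemma count_swap (M1 M2 : V -> option V) (c : pred V) (s : seq V) :
  count (misses (fun x => if c x then M1 x else M2 x)) s +
  count (misses (fun x => if c x then M2 x else M1 x)) s =
  count (misses M1) s + count (misses M2) s.
Proof.
elim: s => [//|x s IH] /=.
have E : misses (fun x => if c x then M1 x else M2 x) x +
         misses (fun x => if c x then M2 x else M1 x) x =
         misses M1 x + misses M2 x.
  by rewrite /misses; case: (c x) => //; rewrite addnC.
lia.
Qed.

Lemma parity (p : seq V) : forall (M1 M2 : V -> option V) x,
  matching adj M1 -> matching adj M2 ->
  path (in_symdiff M1 M2) x p -> uniq (x :: p) ->
  (forall y, M1 x = Some y -> y \notin p) ->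
  (M2 (last x p) = None -> ~~ odd (size p)) /\
  (M1 (last x p) = None -> p != [::] -> odd (size p)).
Proof.
elim: p => [|y q IH] M1 M2 x H1 H2 Hp Hu Hx; first by split.
move: Hp => /= /andP[Exy Hp].
have M2xy : M2 x = Some y.
  move: Exy; rewrite /in_symdiff /in_matching.
  case: (M1 x =P Some y) => [E|_]; first by move: (Hx _ E); rewrite inE eqxx.
  by case: (M2 x =P Some y).
have [_ M2yx] := H2 _ _ M2xy.
move: Hu => /= /andP[]; rewrite inE negb_or => /andP[_ xq] Hu.
have Hp' : path (in_symdiff M2 M1) y q by rewrite (eq_path (@sdC M2 M1)).
have [IH1 IH2] := IH M2 M1 y H2 H1 Hp' Hu
   (fun w E => ltac:(move: E; rewrite M2yx => -[<-]; exact xq)).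
split.
- move=> E; have qn : q != [::] by apply/eqP => Eq; move: E; rewrite Eq /= M2yx.
  by rewrite /= negbK; apply: IH2.
- by move=> E _; rewrite /=; apply: IH1.
Qed.

Definition reach (M1 M2 : V -> option V) (u x : V) :=
  exists p, path (in_symdiff M1 M2) u p /\ last u p = x.

Lemma mlt_same (B : nat -> seq V) M1 M2 M3 :
  (forall n, miss_seq B M1 n = miss_seq B M2 n) -> mlt B M1 M3 -> mlt B M2 M3.
Proof.
move=> E [N [H1 H2]]; exists N; split; last by rewrite -E.
by move=> n hn; rewrite -E; apply: H1.
Qed.

Lemma least (f g : nat -> nat) :
  ~ (forall n, f n = g n) ->
  exists N, (forall n, n < N -> f n = g n) /\ f N <> g N.
Proof.
move=> H.
have ex : exists n, f n != g n.
  apply: NNPP => H'; apply: H => n; apply/eqP; apply: NNPP => H''.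
  by apply: H'; exists n; apply/negP.
exists (ex_minn ex); case: ex_minnP => m /eqP Hm Hmin; split => //.
move=> n hn; apply/eqP; apply: negbNE; apply/negP => Hn.
by move: (Hmin n Hn); rewrite leqNgt hn.
Qed.

Lemma max_eq B M1 M2 : maximum_matching adj B M1 -> maximum_matching adj B M2 ->
  forall n, miss_seq B M1 n = miss_seq B M2 n.
Proof.
move=> [H1 N1] [H2 N2]; apply: NNPP => H.
have [N [HN1 HN2]] := least H.
case: (ltngtP (miss_seq B M1 N) (miss_seq B M2 N)) => // h.
- apply: N2; exists M1; split => //; exists N; split => // n hn; by rewrite HN1.
- apply: N1; exists M2; split => //; exists N; by split.
Qed.

Lemma max_sum B M1 M' M'' : maximum_matching adj B M1 ->
  matching adj M' -> matching adj M'' ->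
  (forall n, miss_seq B M' n + miss_seq B M'' n = 2 * miss_seq B M1 n) ->
  forall n, miss_seq B M' n = miss_seq B M1 n.
Proof.
move=> [H1 N1] H' H'' S; apply: NNPP => H.
have [N [HN1 HN2]] := least H.
case: (ltngtP (miss_seq B M' N) (miss_seq B M1 N)) => // h.
- apply: N1; exists M'; split => //; exists N; split => // n hn; by rewrite HN1.
- apply: N1; exists M''; split => //; exists N; split.
    move=> n hn; have := S n; rewrite HN1 //; lia.
  have := S N; lia.
Qed.

End Aux.

Theorem lemmaA3 (V : countType) (adj : rel V) (B : nat -> seq V)
  (Hg : simple_graph adj) (Hc : connected_graph adj) (HB : dagger adj B)
  (u v : V) (Mu Mv : V -> option V) :
  ~ (exists M, maximum_matching adj B M /\ misses M u /\ misses M v) ->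
  maximum_matching adj B Mu -> misses Mu u ->
  maximum_matching adj B Mv -> misses Mv v ->
  symdiff_even_path Mu Mv u v.
Proof.
move=> Hno HMu /eqP Mu_u HMv /eqP Mv_v.
have mu := HMu.1; have mv := HMv.1.
pose c := fun x => decb (reach Mu Mv u x).
have cu : c u by apply/decbP; exists [::].
have Mvu : Mv u <> None.
  move=> E; apply: Hno; exists Mv; split => //; split; apply/eqP => //.
have edge_ne : forall w x, in_symdiff Mu Mv w x -> Mu x <> Mv x.
  move=> w x; rewrite /in_symdiff /in_matching.
  case: (Mu w =P Some x) => [E|E]; case: (Mv w =P Some x) => [F|F] //= _ K.
  - have [_ G] := mu _ _ E; rewrite G in K; have [_ G'] := mv _ _ (esym K); by apply: F.
  - have [_ G] := mv _ _ F; rewrite G in K; have [_ G'] := mu _ _ K; by apply: E.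
have cne : forall x, c x -> Mu x <> Mv x.
  move=> x /decbP [p [Hp Hl]].
  case/lastP: p Hp Hl => [|q z] Hp Hl.
  - rewrite /= in Hl; subst x; rewrite Mu_u => E; apply: Mvu; by rewrite -E.
  - rewrite rcons_path in Hp; case/andP: Hp => _ Hz; rewrite last_rcons in Hl; subst z.
    exact: edge_ne Hz.
have ccl : forall x y, c x -> in_symdiff Mu Mv x y -> c y.
  move=> x y /decbP [p [Hp Hl]] Hxy; apply/decbP; exists (rcons p y).
  by rewrite rcons_path last_rcons Hp Hl Hxy.
have m2 : matching adj (fun x => if c x then Mu x else Mv x)
  by exact: swap_matching mu mv cne ccl.
have m1 : matching adj (fun x => if c x then Mv x else Mu x).
  apply: swap_matching mv mu _ _ => [x cx E|x y cx]; first by apply: (cne x cx).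
  rewrite sdC; exact: ccl.
have S : forall n, miss_seq B (fun x => if c x then Mu x else Mv x) n +
                   miss_seq B (fun x => if c x then Mv x else Mu x) n = 2 * miss_seq B Mv n.
  move=> n; rewrite /miss_seq count_swap -/(miss_seq B Mu n) -/(miss_seq B Mv n).
  rewrite (max_eq HMu HMv n); lia.
have E2 := max_sum HMv m2 m1 S.
have cv : c v.
  apply: negbNE; apply/negP => ncv; apply: Hno.
  exists (fun x => if c x then Mu x else Mv x); split; last first.
    by rewrite /misses cu (negbTE ncv) Mu_u Mv_v.
  split => // -[M3 [h3 hl]]; apply: HMv.2; exists M3; split => //.
  exact: mlt_same E2 hl.
move: cv => /decbP [p [Hp Hl]].
move: Hl; case: (shortenP Hp) => p' Hp' Hu' _ Hl.
exists p'; split => //.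
have [P1 _] := parity mu mv Hp' Hu' (fun y E => ltac:(by rewrite Mu_u in E)).
by apply: P1; rewrite Hl.
Qed.
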